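(* As an identity of formal power series in $q$ with integer coefficients, $$\sum_{n=0}^\infty\big[(q)_\infty-(q)_n\big] =(q)_\infty\sum_{k=1}^\infty\frac{q^k}{1-q^k} +\sum_{r=1}^\infty(-1)^r\Big[(3r-1)q^{r(3r-1)/2}+3r\,q^{r(3r+1)/2}\Big].$$
   Context: For $n$ a nonnegative integer or $n=\infty$, $(a)_n=\prod_{k=1}^n(1-aq^{k-1})$; in particular $(q)_n=\prod_{k=1}^n(1-q^k)$ and $(q)_0=1$. All series are formal power series in $q$ (the sum on the left converges $q$-adically since $(q)_\infty-(q)_n$ is divisible by $q^{n+1}$). *)

(* Defs.v *)
From mathcomp Require Import all_boot all_order all_algebra.
Set Implicit Arguments. Unset Strict Implicit. Unset Printing Implicit Defensive.
Import Order.TTheory GRing.Theory Num.Theory.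
Local Open Scope ring_scope.

(* formal power series in q with integer coefficients: N |-> coefficient of q^N *)
Definition fps := nat -> int.

Definition fps_of_poly (p : {poly int}) : fps := fun N => p`_N.
Definition fps_add (f g : fps) : fps := fun N => f N + g N.
Definition fps_mul (f g : fps) : fps :=
  fun N => \sum_(i < N.+1) f i * g (N - i)%N.
Definition qmono (c : int) (e : nat) : fps := fun N => if N == e then c else 0.

Definition is_qlim (a : nat -> fps) (s : fps) : Prop :=
  forall N : nat, exists M : nat, forall m : nat, (M <= m)%N -> a m N = s N.
Definition is_qsum (a : nat -> fps) (s : fps) : Prop :=
  is_qlim (fun M N => \sum_(n < M) a n N) s.

Definition qpoch (n : nat) : {poly int} := \prod_(k < n) (1 - 'X^(k.+1)).

(* q^k/(1-q^k) = sum_{m>=1} q^{k m}, expanded as a formal power series (k >= 1) *)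
Definition geomk (k : nat) : fps :=
  fun N => if [&& (0 < k)%N, (k <= N)%N & (k %| N)%N] then 1 else 0.

(* Main.v *)
Require Import Defs.
From mathcomp Require Import all_boot all_order all_algebra.
From mathcomp Require Import ring lra zify.
From Stdlib Require Import FunctionalExtensionality.
Import Order.TTheory GRing.Theory Num.Theory.
Set Implicit Arguments. Unset Strict Implicit. Unset Printing Implicit Defensive.
Local Open Scope ring_scope.

Section Gen.
Variable A : comNzRingType.
Definition Pg (u x : A) n := \prod_(i < n) (1 - u * x ^+ i.+1).
Definition Gg (u x : A) N := \sum_(n < N) Pg u x n * u ^+ n.
Definition psig (u x : A) N := (1 - u) * Gg u x N.
Definition Wg (u x : A) N := \sum_(n < N) Pg u x n * (u * x) ^+ n.

Lemma Pg0 u x : Pg u x 0 = 1. Proof. by rewrite /Pg big_ord0. Qed.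
Lemma PgS u x n : Pg u x n.+1 = Pg u x n * (1 - u * x ^+ n.+1).
Proof. by rewrite /Pg big_ord_recr. Qed.
Lemma PgSl u x n : Pg u x n.+1 = (1 - u * x) * Pg (u * x) x n.
Proof.
rewrite /Pg big_ord_recl expr1; congr (_ * _); apply: eq_bigr => i _.
by rewrite /bump /= exprS mulrA [u * x]mulrC.
Qed.

Lemma tele u x N : (1 - u) * Gg u x N.+1 =
  1 - u ^+ N.+1 * Pg u x N - u ^+ 2 * x * Wg u x N.
Proof.
elim: N => [|N IH].
  by rewrite /Gg /Wg !big_ord1 big_ord0 Pg0 expr0 expr1; ring.
rewrite /Gg big_ord_recr /= -/(Gg u x N.+1) mulrDr IH /Wg big_ord_recr /=.
rewrite -/(Wg u x N) PgS !exprS exprMn; ring.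
Qed.

Lemma WgS u x N : Wg u x N.+1 = 1 + u * x * psig (u * x) x N.
Proof.
rewrite /Wg big_ord_recl Pg0 expr0 mul1r /psig /Gg; congr (_ + _).
rewrite mulrA big_distrr /=; apply: eq_bigr => i _.
by rewrite PgSl exprS; ring.
Qed.

Lemma psig_rec u x N : psig u x N.+2 =
  1 - u ^+ 2 * x - u ^+ N.+2 * Pg u x N.+1 - u ^+ 3 * x ^+ 2 * psig (u * x) x N.
Proof. by rewrite {1}/psig tele WgS !exprS; ring. Qed.
End Gen.


Notation R := {poly int}.
Notation S := {poly R}.
Definition uj (j : nat) : S := 'X * ('X^j)%:P.
Definition xq : S := ('X : R)%:P.
Definition ev (p : S) : R := p.[1].
Definition dv (p : S) : R := (p^`()).[1].

Lemma evM p r : ev (p * r) = ev p * ev r. Proof. exact: hornerM. Qed.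
Lemma dvM p r : dv (p * r) = dv p * ev r + ev p * dv r.
Proof. by rewrite /dv /ev derivM hornerD !hornerM. Qed.
Lemma evB p r : ev (p - r) = ev p - ev r. Proof. by rewrite /ev hornerD hornerN. Qed.
Lemma dvB p r : dv (p - r) = dv p - dv r. Proof. by rewrite /dv derivB hornerD hornerN. Qed.
Lemma evD p r : ev (p + r) = ev p + ev r. Proof. by rewrite /ev hornerD. Qed.
Lemma dvD p r : dv (p + r) = dv p + dv r. Proof. by rewrite /dv derivD hornerD. Qed.
Lemma evC c : ev c%:P = c. Proof. by rewrite /ev hornerC. Qed.
Lemma dvC c : dv c%:P = 0. Proof. by rewrite /dv derivC horner0. Qed.
Lemma ev1 : ev 1 = 1. Proof. by rewrite /ev hornerC. Qed.
Lemma dv1 : dv 1 = 0. Proof. by rewrite /dv derivC horner0. Qed.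
Lemma evMn p k : ev (p *+ k) = ev p *+ k. Proof. by rewrite /ev hornerMn. Qed.
Lemma dvMn p k : dv (p *+ k) = dv p *+ k. Proof. by rewrite /dv derivMn hornerMn. Qed.

Lemma uj_succ j : uj j * xq = uj j.+1.
Proof. by rewrite /uj /xq -mulrA -polyCM -exprSr. Qed.

Lemma ujX j k : uj j ^+ k = 'X^k * ('X^(j * k))%:P.
Proof. by rewrite /uj exprMn -polyC_exp -exprM. Qed.

Lemma ev_uj j k : ev (uj j ^+ k) = 'X^(j * k).
Proof. by rewrite ujX evM /ev hornerXn expr1n hornerC mul1r. Qed.

Lemma dv_uj j k : dv (uj j ^+ k) = 'X^(j * k) *+ k.
Proof.
rewrite ujX dvM dvC mulr0 addr0 /dv /ev derivXn hornerMn hornerXn expr1n.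
by rewrite hornerC mulr_natl.
Qed.

Lemma xqX k : xq ^+ k = ('X^k)%:P.
Proof. by rewrite /xq polyC_exp. Qed.

Definition mo (m : nat) (p : R) := forall i, (i < m)%N -> p`_i = 0.
Lemma mo0 m : mo m 0. Proof. by move=> i _; rewrite coef0. Qed.
Lemma moD m p r : mo m p -> mo m r -> mo m (p + r).
Proof. by move=> hp hr i hi; rewrite coefD hp // hr // addr0. Qed.
Lemma moN m p : mo m p -> mo m (- p).
Proof. by move=> hp i hi; rewrite coefN hp // oppr0. Qed.
Lemma moB m p r : mo m p -> mo m r -> mo m (p - r).
Proof. by move=> hp hr; apply: moD => //; apply: moN. Qed.
Lemma moMn m p k : mo m p -> mo m (p *+ k).
Proof. by move=> hp i hi; rewrite coefMn hp // mul0rn. Qed.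
Lemma mo_le n m p : (n <= m)%N -> mo m p -> mo n p.
Proof. by move=> nm hp i hi; apply: hp; apply: leq_trans nm. Qed.
Lemma moMl m p r : mo m p -> mo m (r * p).
Proof.
move=> hp i hi; rewrite coefM; apply: big1 => k _.
rewrite hp ?mulr0 //; apply: leq_ltn_trans hi; exact: leq_subr.
Qed.
Lemma moMr m p r : mo m p -> mo m (p * r).
Proof. by move=> hp; rewrite mulrC; apply: moMl. Qed.
Lemma moXM a b p : mo b p -> mo (a + b) ('X^a * p).
Proof.
move=> hp i hi; rewrite coefXnM; case: ltnP => // h; apply: hp.
by rewrite ltn_subLR.
Qed.
Lemma moX a : mo a ('X^a).
Proof. by move=> i hi; rewrite coefXn; case: eqP => // hia; rewrite hia ltnn in hi. Qed.

Lemma bd_mo j k p : mo (j * k) (ev (uj j ^+ k * p)) /\ mo (j * k) (dv (uj j ^+ k * p)).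
Proof.
rewrite evM dvM ev_uj dv_uj; split.
  by rewrite mulrC; apply: moMl; apply: moX.
apply: moD; first by apply: moMr; apply: moMn; apply: moX.
by apply: moMr; apply: moX.
Qed.

Definition vv m j := ev (psig (uj j) xq m).
Definition dd m j := dv (psig (uj j) xq m).

Lemma vv_rec m j : vv m.+2 j = 1 - 'X^(j * 2) * 'X
   - ev (uj j ^+ m.+2 * Pg (uj j) xq m.+1) - 'X^(j * 3) * 'X^2 * vv m j.+1.
Proof.
rewrite /vv psig_rec uj_succ !evB ev1 [ev (uj j ^+ 2 * _)]evM.
rewrite [ev (uj j ^+ 3 * _ * _)]evM [ev (uj j ^+ 3 * _)]evM !ev_uj xqX /xq !evC.
by [].
Qed.

Lemma dd_rec m j : dd m.+2 j = - ('X^(j * 2) * 'X) *+ 2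
   - dv (uj j ^+ m.+2 * Pg (uj j) xq m.+1)
   - ('X^(j * 3) * 'X^2) *+ 3 * vv m j.+1 - 'X^(j * 3) * 'X^2 * dd m j.+1.
Proof.
rewrite /dd /vv psig_rec uj_succ !dvB dv1 [dv (uj j ^+ 2 * _)]dvM.
rewrite [dv (uj j ^+ 3 * _ * _)]dvM [dv (uj j ^+ 3 * _)]dvM.
rewrite [ev (uj j ^+ 3 * _)]evM !ev_uj !dv_uj xqX /xq !evC !dvC.
rewrite !mulr0 !addr0 -!mulrnAl; ring.
Qed.


Fixpoint pe (k : nat) : nat := match k with 0 => 0 | k'.+1 => (pe k' + 3 * k' + 2)%N end.
Definition ex j k := (3 * j * k + pe k)%N.

Definition Vc K j : R := \sum_(k < K) (-1) ^+ k *
   ('X^(ex j k) - 'X^(ex j k + 2 * (j + k) + 1)).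
Definition Dc K j : R := \sum_(k < K) (-1) ^+ k *
   ('X^(ex j k) *+ (3 * k) - 'X^(ex j k + 2 * (j + k) + 1) *+ (3 * k + 2)).

Lemma Xe (a b : nat) : a = b -> ('X^a : R) = 'X^b. Proof. by move->. Qed.

Lemma exS j k : ex j k.+1 = (j * 3 + 2 + ex j.+1 k)%N.
Proof. rewrite /ex /=; nia. Qed.
Lemma exS2 j k : (ex j k.+1 + 2 * (j + k.+1) + 1 = j * 3 + 2 + (ex j.+1 k + 2 * (j.+1 + k) + 1))%N.
Proof. rewrite exS; lia. Qed.

Lemma Vc_rec K j : Vc K.+1 j = 1 - 'X^(j * 2) * 'X - 'X^(j * 3) * 'X^2 * Vc K j.+1.
Proof.
rewrite /Vc big_ord_recl /= big_distrr /=; congr (_ + _).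
  rewrite expr0 mul1r /ex /= muln0 add0n expr0 (Xe (_ : _ = j * 2 + 1)%N) ?exprD ?expr1 //.
  lia.
rewrite -sumrN; apply: eq_bigr => k _; rewrite /bump /= add1n.
rewrite exS2 exS !exprD exprS; ring.
Qed.

Lemma Dc_rec K j : Dc K.+1 j = - ('X^(j * 2) * 'X) *+ 2
   - ('X^(j * 3) * 'X^2) *+ 3 * Vc K j.+1 - 'X^(j * 3) * 'X^2 * Dc K j.+1.
Proof.
rewrite /Dc /Vc big_ord_recl /= !big_distrr /= -addrA; congr (_ + _).
  rewrite expr0 mul1r /ex /= muln0 add0n mulr0n sub0r (Xe (_ : _ = j * 2 + 1)%N).
    by rewrite exprD expr1 mulNrn.
  lia.
rewrite -sumrN -sumrB; apply: eq_bigr => k _; rewrite /bump /= add1n.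
rewrite exS2 exS !exprD exprS.
rewrite (_ : (3 * k.+1 + 2 = 3 * k + 2 + 3)%N); last lia.
rewrite (_ : (3 * k.+1 = 3 * k + 3)%N); last lia.
rewrite !mulrnDr; ring.
Qed.


Lemma mo_shift j m p : mo (j.+1 * m) p -> mo (j * (m.+2)) ('X^(j * 3) * 'X^2 * p).
Proof.
move=> hp; rewrite -exprD; apply: (@mo_le _ (j * 3 + 2 + j.+1 * m)); first nia.
exact: moXM.
Qed.

Lemma err_even N : forall j, mo (j * (2 * N)) (vv (2 * N) j - Vc N j) /\
                             mo (j * (2 * N)) (dd (2 * N) j - Dc N j).
Proof.
elim: N => [|N IH] j.
  by rewrite muln0 muln0; split => i.
rewrite (_ : (2 * N.+1 = (2 * N).+2)%N); last lia.
have [e1 e2] := IH j.+1.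
have [b1 b2] := bd_mo j (2 * N).+2 (Pg (uj j) xq (2 * N).+1).
split.
  rewrite vv_rec Vc_rec.
  set B := ev _; set E := vv _ _.
  have -> : 1 - 'X^(j * 2) * 'X - B - 'X^(j * 3) * 'X^2 * E -
    (1 - 'X^(j * 2) * 'X - 'X^(j * 3) * 'X^2 * Vc N j.+1) =
    - B - 'X^(j * 3) * 'X^2 * (E - Vc N j.+1) by ring.
  by apply: moB; [apply: moN | apply: mo_shift].
rewrite dd_rec Dc_rec.
set B := dv _; set E := vv _ _; set F := dd _ _.
have -> : - ('X^(j * 2) * 'X) *+ 2 - B - 'X^(j * 3) * 'X^2 *+ 3 * E -
    'X^(j * 3) * 'X^2 * F - (- ('X^(j * 2) * 'X) *+ 2 -
    'X^(j * 3) * 'X^2 *+ 3 * Vc N j.+1 - 'X^(j * 3) * 'X^2 * Dc N j.+1) =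
    - B - 'X^(j * 3) * 'X^2 * ((E - Vc N j.+1) *+ 3 + (F - Dc N j.+1)).
  by rewrite -!mulrnAl; ring.
apply: moB; first by apply: moN.
by apply: mo_shift; apply: moD => //; apply: moMn.
Qed.


Lemma ev_lin0 k : ev (1 - uj 0 * xq ^+ k) = 1 - 'X^k.
Proof. by rewrite evB ev1 -[uj 0]expr1 evM ev_uj xqX evC mul0n expr0 mul1r. Qed.
Lemma dv_lin0 k : dv (1 - uj 0 * xq ^+ k) = - 'X^k.
Proof.
by rewrite dvB dv1 -[uj 0]expr1 dvM ev_uj dv_uj xqX evC dvC mul0n expr0 mulr0 addr0 mul1r sub0r.
Qed.

Lemma evP0 n : ev (Pg (uj 0) xq n) = qpoch n.
Proof.
elim: n => [|n IH]; first by rewrite Pg0 ev1 /qpoch big_ord0.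
by rewrite PgS evM IH ev_lin0 /qpoch big_ord_recr.
Qed.

Definition dvP n := dv (Pg (uj 0) xq n).
Lemma dvPS n : dvP n.+1 = dvP n * (1 - 'X^(n.+1)) - qpoch n * 'X^(n.+1).
Proof. by rewrite /dvP PgS dvM ev_lin0 dv_lin0 evP0 mulrN. Qed.

Lemma dd0 m : dd m 0 = - \sum_(n < m) qpoch n.
Proof.
have u1 : dv (uj 0) = 1 by rewrite -[uj 0]expr1 dv_uj expr0.
have u2 : ev (uj 0) = 1 by rewrite -[uj 0]expr1 ev_uj expr0.
rewrite /dd /psig dvM dvB dv1 u1 evB ev1 u2 subrr mul0r addr0.
rewrite /Gg /ev horner_sum sub0r mulN1r; congr (- _); apply: eq_bigr => n _.
by rewrite hornerM -/(ev _) evP0 -/(ev _) ev_uj expr0 mulr1.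
Qed.

Lemma bd0 k n : dv (uj 0 ^+ k * Pg (uj 0) xq n) = qpoch n *+ k + dvP n.
Proof. rewrite dvM dv_uj ev_uj evP0 expr0 mul1r. by rewrite mulr_natl. Qed.

Definition gk M k : R := \poly_(i < M.+1) geomk k i.
Definition Gs M n : R := \sum_(k < n) gk M k.+1.

Lemma geomk_shift k i : (0 < k)%N -> (k < i)%N -> geomk k i = geomk k (i - k)%N.
Proof.
move=> k0 ki; rewrite /geomk k0 /=.
have h : (k %| (i - k))%N = (k %| i)%N.
  by rewrite -{2}(subnK (ltnW ki)) dvdn_addl // dvdnn.
rewrite h; case: (boolP (k %| i)%N) => hd; rewrite ?andbF //.
rewrite (ltnW ki) /=; rewrite dvdn_leq //; first by rewrite subn_gt0.
by rewrite h.
Qed.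

Lemma g_cong M k : (0 < k)%N -> mo M.+1 ((1 - 'X^k) * gk M k - 'X^k).
Proof.
move=> k0 i hi; rewrite coefB mulrBl mul1r coefB coefXnM coefXn /gk !coef_poly hi.
case: (ltngtP i k) => h.
- rewrite /geomk k0 /= (leqNgt k i) h /=; by rewrite subrr.
- rewrite (_ : (i - k < M.+1)%N); last by apply: leq_ltn_trans hi; exact: leq_subr.
  by rewrite -geomk_shift // subrr.
- subst i; rewrite subnn ltn0Sn /geomk k0 leqnn dvdnn /=.
  by rewrite leqNgt k0 /= subr0 subrr.
Qed.

Lemma dvP_cong M n : mo M.+1 (dvP n + qpoch n * Gs M n).
Proof.
elim: n => [|n IH].
  rewrite /dvP Pg0 dv1 /Gs big_ord0 mulr0 addr0; exact: mo0.
have -> : dvP n.+1 + qpoch n.+1 * Gs M n.+1 =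
   (1 - 'X^(n.+1)) * (dvP n + qpoch n * Gs M n) +
   qpoch n * ((1 - 'X^(n.+1)) * gk M n.+1 - 'X^(n.+1)).
  by rewrite dvPS /qpoch big_ord_recr /= -/(qpoch n) /Gs big_ord_recr /=; ring.
by apply: moD; [apply: moMl | apply: moMl; apply: g_cong].
Qed.

Lemma main_cong N : let M := (2 * N).+1 in
  mo M.+1 ((qpoch M) *+ M.+1 - \sum_(n < M.+1) qpoch n - Dc N.+1 0 - qpoch M * Gs M M).
Proof.
move=> M.
have [e1 e2] := err_even N 1.
have h := dd_rec (2 * N) 0.
rewrite dd0 bd0 -/M in h.
have hX : mo M.+1 (- \sum_(n < M.+1) qpoch n - Dc N.+1 0 + qpoch M *+ M.+1 + dvP M).
  rewrite h Dc_rec !mul0n !expr0 !mul1r.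
  have -> : - 'X *+ 2 - (qpoch M *+ M.+1 + dvP M) - 'X^2 *+ 3 * vv (2 * N) 1 -
    'X^2 * dd (2 * N) 1 - (- 'X *+ 2 - 'X^2 *+ 3 * Vc N 1 - 'X^2 * Dc N 1) +
    qpoch M *+ M.+1 + dvP M = - ('X^2 * ((vv (2 * N) 1 - Vc N 1) *+ 3 + (dd (2 * N) 1 - Dc N 1))).
    by rewrite /M -!mulrnAl; ring.
  apply: moN; rewrite /M (_ : (2 * N).+2 = 2 + 1 * (2 * N))%N; last by lia.
  by apply: moXM; apply: moD => //; apply: moMn; rewrite mul1n in e1 *.
have hY := @dvP_cong M M.
have -> : qpoch M *+ M.+1 - \sum_(n < M.+1) qpoch n - Dc N.+1 0 - qpoch M * Gs M M =
  (- \sum_(n < M.+1) qpoch n - Dc N.+1 0 + qpoch M *+ M.+1 + dvP M) -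
  (dvP M + qpoch M * Gs M M) by ring.
exact: moB.
Qed.


Lemma qpoch_stab N d : mo N.+1 (qpoch (N + d) - qpoch N).
Proof.
elim: d => [|d IH]; first by rewrite addn0 subrr; exact: mo0.
have -> : qpoch (N + d.+1) - qpoch N = (qpoch (N + d) - qpoch N) - 'X^((N + d).+1) * qpoch (N + d).
  by rewrite addnS /qpoch big_ord_recr /= -/(qpoch (N + d)); ring.
apply: moB => //; apply: moMr; rewrite -addSn exprD; apply: moMr; exact: moX.
Qed.

Lemma qpoch_coef i n : (i <= n)%N -> (qpoch n)`_i = (qpoch i)`_i.
Proof.
move=> hin; have h := @qpoch_stab i (n - i)%N; rewrite subnKC in h => //.
by apply/eqP; rewrite -subr_eq0 -coefB h.
Qed.

Definition Pinf : fps := fun N => (qpoch N)`_N.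
Definition Lw : fps := fun N => \sum_(n < N.+1) (Pinf N - (qpoch n)`_N).
Definition Sw : fps := fun j => \sum_(k < j) geomk k.+1 j.
Definition termT (r : nat) : fps :=
      fps_add (qmono ((-1) ^+ r.+1 * ((3 * r.+1 - 1)%N)%:Z) ((r.+1 * (3 * r.+1 - 1)) %/ 2))
              (qmono ((-1) ^+ r.+1 * ((3 * r.+1)%N)%:Z) ((r.+1 * (3 * r.+1 + 1)) %/ 2)).
Definition Tw : fps := fun N => \sum_(r < N) termT r N.

Lemma Lsum N d : \sum_(n < N.+1 + d) (Pinf N - (qpoch n)`_N) = Lw N.
Proof.
elim: d => [|d IH]; first by rewrite addn0.
rewrite addnS big_ord_recr /= IH qpoch_coef; last by lia.
by rewrite /Pinf subrr addr0.
Qed.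

Lemma Ssum j d : \sum_(k < j + d) geomk k.+1 j = Sw j.
Proof.
elim: d => [|d IH]; first by rewrite addn0.
rewrite addnS big_ord_recr /= IH /geomk /=.
by rewrite ltnNge leq_addr /= addr0.
Qed.

Lemma pe2 k : (2 * pe k = k * (3 * k + 1))%N.
Proof. elim: k => [|k IH] //=; nia. Qed.
Lemma e1E r : ((r.+1 * (3 * r.+1 - 1)) %/ 2 = pe r + 2 * r + 1)%N.
Proof.
rewrite (_ : (r.+1 * (3 * r.+1 - 1) = 2 * (pe r + 2 * r + 1))%N) ?mulKn //.
have := pe2 r; nia.
Qed.
Lemma e2E r : ((r.+1 * (3 * r.+1 + 1)) %/ 2 = pe r.+1)%N.
Proof. by rewrite -pe2 mulKn. Qed.
Lemma pe_ge k : (k <= pe k)%N.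
Proof. by elim: k => [|k IH] //=; lia. Qed.

Lemma termT0 r N : (N <= r)%N -> termT r N = 0.
Proof.
move=> h; rewrite /termT /fps_add /qmono e1E e2E.
rewrite ifN; last by apply/eqP; have := pe_ge r; lia.
rewrite ifN; last by apply/eqP => /=; have := pe_ge r; lia.
by rewrite addr0.
Qed.

Lemma Tsum N d : \sum_(r < N + d) termT r N = Tw N.
Proof.
elim: d => [|d IH]; first by rewrite addn0.
by rewrite addnS big_ord_recr /= IH termT0 ?addr0 // leq_addr.
Qed.


Lemma coef_sgn k (p : R) i : ((-1) ^+ k * p)`_i = (-1) ^+ k * p`_i.
Proof.
rewrite -signr_odd -[(-1) ^+ k : int]signr_odd; case: (odd k) => /=.
  by rewrite !expr1 !mulN1r coefN.
by rewrite !expr0 !mul1r.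
Qed.

Lemma Dc_coef N : (Dc N.+1 0)`_N = Tw N.
Proof.
rewrite /Dc coef_sum.
under eq_bigr => k _ do rewrite coef_sgn coefB !coefMn !coefXn /ex muln0 mul0n add0n mulrBr.
rewrite sumrB big_ord_recl big_ord_recr muln0 mulr0n mulr0 add0r !add0n.
rewrite (_ : (N == pe N + 2 * N + 1)%N = false); last by apply/eqP; lia.
rewrite /= mulr0n mul0rn mulr0 addr0 /Tw -sumrB; apply: eq_bigr => r _.
rewrite /termT /fps_add /qmono e1E e2E /bump /= ?add0n ?add1n addrC.
congr (_ + _).
  case: (N == _) => /=; last by rewrite mulr0n mul0rn mulr0 oppr0.
  rewrite exprS (_ : (3 * r.+1 - 1 = 3 * r + 2)%N); last by lia.
  by rewrite mulN1r mulNr mulr1n natz.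
case: (N == _) => /=; last by rewrite mulr0n mul0rn mulr0.
by rewrite mulr1n natz.
Qed.


Lemma main_coef N : Lw N = fps_add (fps_mul Pinf Sw) Tw N.
Proof.
pose M := (2 * N).+1.
have h := @main_cong N; rewrite -/M in h.
have hN : (N < M.+1)%N by rewrite /M; lia.
have := h N hN; rewrite !coefB coefMn coef_sum Dc_coef coefM => /eqP.
rewrite subr_eq0 => /eqP hE.
have hL : Lw N = (qpoch M)`_N *+ M.+1 - \sum_(n < M.+1) (qpoch n)`_N.
  rewrite -(Lsum N N.+1) (_ : (N.+1 + N.+1 = M.+1)%N); last by rewrite /M; lia.
  rewrite sumrB sumr_const card_ord /Pinf -(@qpoch_coef N M) //; rewrite /M; lia.
have hS : \sum_(i < N.+1) Pinf i * Sw (N - i)%N =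
          \sum_(j < N.+1) (qpoch M)`_j * (Gs M M)`_(N - j)%N.
  apply: eq_bigr => i _.
  rewrite qpoch_coef; last by rewrite /M; have := ltn_ord i; lia.
  congr (_ * _); rewrite /Gs coef_sum.
  rewrite -(Ssum (N - i)%N (M - (N - i))%N) (_ : (N - i + (M - (N - i)) = M)%N); last first.
    by have := ltn_ord i; rewrite /M; lia.
  apply: eq_bigr => k _; rewrite /gk coef_poly.
  by rewrite (_ : (N - i < M.+1)%N = true) //; apply/idP; rewrite /M; lia.
rewrite /fps_add /fps_mul hS hL -hE; ring.
Qed.

Theorem theorem1 :
  exists Pinf L S T : fps,
    (* Pinf = (q)_oo, the q-adic limit of (q)_n *)
    is_qlim (fun n => fps_of_poly (qpoch n)) Pinf /\
    (* L = sum_{n>=0} [(q)_oo - (q)_n] *)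
    is_qsum (fun n N => Pinf N - (qpoch n)`_N) L /\
    (* S = sum_{k>=1} q^k/(1-q^k) *)
    is_qsum (fun k => geomk k.+1) S /\
    (* T = sum_{r>=1} (-1)^r [(3r-1) q^{r(3r-1)/2} + 3r q^{r(3r+1)/2}] *)
    is_qsum (fun r =>
      fps_add (qmono ((-1) ^+ r.+1 * ((3 * r.+1 - 1)%N)%:Z) ((r.+1 * (3 * r.+1 - 1)) %/ 2))
              (qmono ((-1) ^+ r.+1 * ((3 * r.+1)%N)%:Z) ((r.+1 * (3 * r.+1 + 1)) %/ 2))) T /\
    L = fps_add (fps_mul Pinf S) T.
Proof.
exists Pinf, Lw, Sw, Tw; split; [|split; [|split; [|split]]].
- move=> N; exists N => m hm; by rewrite /fps_of_poly qpoch_coef.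
- move=> N; exists N.+1 => m hm.
  by rewrite -(Lsum N (m - N.+1)) subnKC.
- move=> N; exists N => m hm.
  by rewrite -(Ssum N (m - N)) subnKC.
- move=> N; exists N => m hm.
  by rewrite -(Tsum N (m - N)) subnKC.
- apply: functional_extensionality => N; exact: main_coef.
Qed.
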